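(* Let $n,k\ge 0$ be integers with expansions $(n)_{\mathbf F}=(n_0,n_1,n_2,\ldots)$ and $(k)_{\mathbf F}=(k_0,k_1,k_2,\ldots)$ in the base $\mathbf F$. Then $$\binom{n}{k}_F\equiv \binom{n_0}{k_0}_F\binom{n_1}{k_1}_F\binom{n_2}{k_2}_F\cdots \pmod 2$$ (the product is effectively finite since all but finitely many factors are $\binom{0}{0}_F=1$).
   Context: The Fibonacci numbers are defined by $F_0=0$, $F_1=1$, $F_n=F_{n-1}+F_{n-2}$ for $n\ge 2$. For $n\ge 0$ let $n!_F=F_1F_2\cdots F_n$ (with $0!_F=1$), and for $0\le k\le n$ define the Fibonomial coefficient $\binom{n}{k}_F=\dfrac{n!_F}{k!_F\,(n-k)!_F}$; by convention $\binom{n}{k}_F=0$ if $k<0$ or $k>n$. The base $\mathbf F$ is the sequence $(b_0,b_1,b_2,\ldots)=(1,3,3\cdot 2,3\cdot 2^2,\ldots)$, i.e. $b_0=1$ and $b_i=3\cdot 2^{i-1}$ for $i\ge 1$. Every integer $n\ge 0$ has a unique expansion $n=\sum_{i\ge 0} n_i b_i$ with $0\le n_i<b_{i+1}/b_i$ for all $i$ (so $0\le n_0\le 2$ and $n_i\in\{0,1\}$ for $i\ge 1$, with only finitely many nonzero digits); this digit sequence is denoted $(n)_{\mathbf F}=(n_0,n_1,n_2,\ldots)$. *)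

(* Defs.v *)
From mathcomp Require Import all_boot.
Set Implicit Arguments. Unset Strict Implicit. Unset Printing Implicit Defensive.

Fixpoint fib (n : nat) : nat :=
  match n with
  | 0 => 0
  | 1 => 1
  | (m.+1 as p).+1 => fib p + fib m
  end.

Definition fibfact (n : nat) : nat := \prod_(1 <= i < n.+1) fib i.

(* Fibonomial coefficient; 0 when k > n.  The quotient is exact (a known
   fact), so nat division computes the paper's quotient. *)
Definition fibonomial (n k : nat) : nat :=
  if k <= n then fibfact n %/ (fibfact k * fibfact (n - k)) else 0.

Definition baseF (i : nat) : nat := if i is j.+1 then 3 * 2 ^ j else 1.

Definition is_F_expansion (N n : nat) (d : nat -> nat) : Prop :=
  [/\ forall i, d i < baseF i.+1 %/ baseF i,
      forall i, N <= i -> d i = 0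
    & n = \sum_(i < N) d i * baseF i].

Example fib_test : [seq fib i | i <- iota 0 8] = [:: 0;1;1;2;3;5;8;13]. Proof. by vm_compute. Qed.
Example fibo_test : fibonomial 5 2 = 15.
Proof. by rewrite /fibonomial /fibfact unlock. Qed.

(* Main.v *)
Require Import Defs.
From mathcomp Require Import all_boot.
From mathcomp Require Import zify ring.

Lemma fibSS n : fib n.+2 = fib n.+1 + fib n.
Proof. by []. Qed.

Lemma fib_add a b : fib (a + b).+1 = fib a * fib b + fib a.+1 * fib b.+1.
Proof.
elim: a b => [|a IH] b; first by rewrite add0n mul0n mul1n.
rewrite addSn -addnS IH fibSS fibSS; ring.
Qed.

Lemma fib_gt0 i : 0 < fib i.+1.
Proof.
elim: i {-2}i (leqnn i) => [|i IH] [|[|j]] // Hj.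
rewrite fibSS ltn_addr // IH //; lia.
Qed.

Lemma fibfactS n : fibfact n.+1 = fibfact n * fib n.+1.
Proof. by rewrite /fibfact big_nat_recr. Qed.

Lemma fibfact0 : fibfact 0 = 1.
Proof. by rewrite /fibfact big_geq. Qed.

Lemma fibfact_gt0 n : 0 < fibfact n.
Proof.
elim: n => [|n IH]; first by rewrite fibfact0.
by rewrite fibfactS muln_gt0 IH fib_gt0.
Qed.

Fixpoint G n k := match n, k with
 | _, 0 => 1
 | 0, _.+1 => 0
 | n'.+1, k'.+1 => fib k' * G n' k'.+1 + fib (n'.+1 - k') * G n' k'
 end.

Lemma Gsmall n k : n < k -> G n k = 0.
Proof.
elim: n k => [|n IH] [|k] //= H.
by rewrite !IH ?muln0 //; lia.
Qed.

Lemma Gfact n k : k <= n -> G n k * (fibfact k * fibfact (n - k)) = fibfact n.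
Proof.
elim: n k => [|n IH] [|k] //= H.
- by rewrite fibfact0 !mul1n.
- by rewrite fibfact0 !mul1n.
have [->|Hkn] := eqVneq k n.
  have Gnn : forall p, G p p = 1.
    by elim=> [|p IHp] //=; rewrite Gsmall // subSnn IHp muln0.
  by rewrite Gsmall // subSnn Gnn muln0 add0n !mul1n subnn fibfact0 muln1.
have Hk : k < n by lia.
have E2 : n.+1 - k = (n - k.+1).+2 by lia.
have E3 : n.+1 - k.+1 = (n - k.+1).+1 by lia.
have I1 := IH k.+1 Hk.
have I2 := IH k (ltnW Hk).
have E : n - k = (n - k.+1).+1 by lia.
rewrite E in I2.
rewrite E2 E3.
set p := n - k.+1.
have F := fib_add k p.+1.
have Ep : (k + p.+1).+1 = n.+1 by rewrite /p; lia.
rewrite Ep in F.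
have X : fibfact n * fib n.+1 = (G n k.+1 * (fibfact k.+1 * fibfact p)) * (fib k * fib p.+1)
   + (G n k * (fibfact k * fibfact p.+1)) * (fib k.+1 * fib p.+2).
  by rewrite I1 I2 -mulnDr -F.
rewrite [fibfact n.+1]fibfactS X !fibfactS; ring.
Qed.

Lemma fibonomialE n k : fibonomial n k = G n k.
Proof.
rewrite /fibonomial; case: leqP => H.
  by rewrite -(@Gfact n k H) mulnK // muln_gt0 !fibfact_gt0.
by rewrite Gsmall.
Qed.

Lemma fib_odd3 i : [/\ odd (fib (3*i)) = false, odd (fib (3*i).+1) & odd (fib (3*i).+2)].
Proof.
elim: i => [|i [H0 H1 H2]] //.
have -> : 3 * i.+1 = (3*i).+3 by lia.
have A : odd (fib (3*i).+3) = false by rewrite fibSS oddD H2 H1.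
have B : odd (fib (3*i).+4) by rewrite fibSS oddD A H2.
split => //; by rewrite fibSS oddD A B.
Qed.

Lemma fib_odd i : odd (fib i) = (i %% 3 != 0).
Proof.
rewrite (divn_eq i 3).
have : i %% 3 < 3 by rewrite ltn_mod.
have [H0 H1 H2] := fib_odd3 (i %/ 3).
case: (i %% 3) => [|[|[|]]] // _; rewrite modnMDl (mulnC _ 3).
- by rewrite addn0 H0.
- by rewrite addn1 H1.
- by rewrite addn2 H2.
Qed.

Lemma Qsmall3 x y : x < y -> (y %% 3 <= x %% 3) && odd 'C(x %/ 3, y %/ 3) = false.
Proof.
move=> H; have [Hl|Hl] := ltnP (x %/ 3) (y %/ 3).
  by rewrite bin_small ?andbF.
have : y %% 3 > x %% 3 by lia.
by rewrite ltnNge => /negbTE ->.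
Qed.

Lemma fibQ n k : odd (G n k) = (k %% 3 <= n %% 3) && odd 'C(n %/ 3, k %/ 3).
Proof.
elim: n k => [|n IH] [|k].
- by [].
- by rewrite /= Qsmall3.
- by rewrite /= div0n bin0.
have [Hkn|Hkn] := ltnP n k.
  by rewrite Gsmall ?Qsmall3 //.
rewrite /= oddD !oddM !fib_odd !IH.
set m := n %/ 3; set a := n %% 3; set j := k %/ 3; set b := k %% 3.
have Ha : a < 3 by rewrite ltn_mod.
have Hb : b < 3 by rewrite ltn_mod.
have En : n = 3 * m + a by rewrite /m /a; lia.
have Ek : k = 3 * j + b by rewrite /j /b; lia.
have -> : k.+1 %% 3 = b.+1 %% 3 by lia.
have -> : n.+1 %% 3 = a.+1 %% 3 by lia.
have -> : k.+1 %/ 3 = j + b.+1 %/ 3 by lia.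
have -> : n.+1 %/ 3 = m + a.+1 %/ 3 by lia.
have -> : (n.+1 - k) %% 3 = (4 + a - b) %% 3 by lia.
clear En Ek; move: Ha Hb; clearbody a b m j.
case: a => [|[|[|]]] // _; case: b => [|[|[|]]] // _ /=;
  rewrite ?addn0 ?addn1 ?andbF ?andbT ?addbF ?addFb //.
- by rewrite addbb.
- by rewrite binS oddD.
Qed.

Lemma binQ n k : odd 'C(n, k) = (k %% 2 <= n %% 2) && odd 'C(n %/ 2, k %/ 2).
Proof.
elim: n k => [|n IH] [|k].
- by [].
- rewrite div0n; have [H|H] := posnP (k.+1 %/ 2).
    by have -> : k = 0 by lia.
  by rewrite [in RHS]bin_small ?andbF.
- by rewrite bin0 (_ : 0 %/ 2 = 0) // bin0 andbT.
have [Hkn|Hkn] := ltnP n k.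
  rewrite (@bin_small n.+1 k.+1) /=; last lia.
  have [Hl|Hl] := ltnP (n.+1 %/ 2) (k.+1 %/ 2).
    by rewrite bin_small ?andbF.
  have : k.+1 %% 2 > n.+1 %% 2 by lia.
  by rewrite ltnNge => /negbTE ->.
rewrite binS oddD !IH.
set m := n %/ 2; set a := n %% 2; set j := k %/ 2; set b := k %% 2.
have Ha : a < 2 by rewrite ltn_mod.
have Hb : b < 2 by rewrite ltn_mod.
have En : n = 2 * m + a by rewrite /m /a; lia.
have Ek : k = 2 * j + b by rewrite /j /b; lia.
have -> : k.+1 %% 2 = b.+1 %% 2 by lia.
have -> : n.+1 %% 2 = a.+1 %% 2 by lia.
have -> : k.+1 %/ 2 = j + b.+1 %/ 2 by lia.
have -> : n.+1 %/ 2 = m + a.+1 %/ 2 by lia.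
clear En Ek; move: Ha Hb; clearbody a b m j.
case: a => [|[|]] // _; case: b => [|[|]] // _ /=;
  rewrite ?addn0 ?addn1 ?andbF ?andbT ?addbF ?addFb ?addbb //.
by rewrite binS oddD.
Qed.

Lemma modD_small p a x : a < p -> (a + p * x) %% p = a.
Proof. move=> H; rewrite addnC mulnC modnMDl modn_small //. Qed.

Lemma divD_small p a x : a < p -> (a + p * x) %/ p = x.
Proof. move=> H; rewrite addnC mulnC divnMDl ?divn_small ?addn0 //; lia. Qed.

Lemma sum2S M (f : nat -> nat) : \sum_(i < M.+1) f i * 2 ^ i
   = f 0 + 2 * \sum_(i < M) f i.+1 * 2 ^ i.
Proof.
rewrite big_ord_recl expn0 muln1 big_distrr; congr (_ + _).
by apply: eq_bigr => i _; rewrite /= expnS mulnCA.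
Qed.

Lemma lucas2 M (d e : nat -> nat) : (forall i, d i < 2) -> (forall i, e i < 2) ->
  odd 'C(\sum_(i < M) d i * 2 ^ i, \sum_(i < M) e i * 2 ^ i)
  = \big[andb/true]_(i < M) (e i <= d i).
Proof.
elim: M d e => [|M IH] d e Hd He; first by rewrite !big_ord0.
rewrite !sum2S binQ big_ord_recl.
have Hd0 := Hd 0; have He0 := He 0.
rewrite !modD_small // !divD_small //.
congr (_ && _).
exact: (IH (fun i => d i.+1) (fun i => e i.+1)).
Qed.

Lemma odd_prod I (r : seq I) (F : I -> nat) :
  odd (\prod_(i <- r) F i) = \big[andb/true]_(i <- r) odd (F i).
Proof. by elim: r => [|x r IH]; rewrite ?big_nil ?big_cons // oddM IH. Qed.

Lemma digit_odd d e : d < 3 -> e < 3 -> odd (fibonomial d e) = (e <= d).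
Proof.
move=> Hd He; rewrite fibonomialE fibQ !divn_small // bin0 andbT !modn_small //.
Qed.

Lemma baseF_ratio i : baseF i.+2 %/ baseF i.+1 = 2.
Proof. by rewrite /= expnS mulnCA mulnK // muln_gt0 expn_gt0. Qed.

Theorem mainTheorem4 (n k N : nat) (nd kd : nat -> nat) :
  is_F_expansion N n nd -> is_F_expansion N k kd ->
  fibonomial n k = \prod_(i < N) fibonomial (nd i) (kd i) %[mod 2].
Proof.
move=> [Hnd _ En] [Hkd _ Ek].
have Bd i : nd i < 3.
  have := Hnd i; case: i => [|i] //; rewrite baseF_ratio; lia.
have Bk i : kd i < 3.
  have := Hkd i; case: i => [|i] //; rewrite baseF_ratio; lia.
rewrite !modn2 odd_prod.
rewrite (eq_bigr (fun i : 'I_N => kd i <= nd i)); last first.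
  by move=> i _; rewrite digit_odd.
congr (nat_of_bool _).
rewrite fibonomialE fibQ.
case: N En Ek => [|N] En Ek.
  by rewrite En Ek !big_ord0.
rewrite big_ord_recl.
have S (d : nat -> nat) : \sum_(i < N.+1) d i * baseF i
   = d 0 + 3 * \sum_(i < N) d i.+1 * 2 ^ i.
  rewrite big_ord_recl /= muln1 big_distrr /=; congr (_ + _).
  by apply: eq_bigr => i _; rewrite mulnCA.
rewrite En Ek !S.
have Hd0 := Bd 0; have Hk0 := Bk 0.
rewrite !modD_small // !divD_small //.
congr (_ && _).
apply: (@lucas2 N (fun i => nd i.+1) (fun i => kd i.+1)) => i.
- have := Hnd i.+1; rewrite baseF_ratio; lia.
- have := Hkd i.+1; rewrite baseF_ratio; lia.
Qed.
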